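(* Let $\mathbf x=(x_1,\dots,x_n)\in\mathbb R_{\ge0}^n$, let $B\ge1$ be an integer, and let $\mathbf a=\mathrm{RAS}(\mathbf x;B)$. Then for all $i,j\in[n]$, $$a_jx_j\le(a_i+1)x_i.$$
   Context: $\odot$ is the entrywise product and $\mathbf e_i$ the $i$-th unit vector. RAS$(x_1,\dots,x_n;B)$: relabel indices so that $x_1\le\dots\le x_n$ (the output is returned in the original labeling). If $B=1$ return $\mathbf e_1$. Otherwise let $\mathbf a=\mathrm{RAS}(\mathbf x;B-1)$; let $r=\min\{i:a_i=0\}$ if $a_n=0$, else $r=n$; let $M=\arg\min_{i\in[r]}\|(\mathbf a+\mathbf e_i)\odot\mathbf x\|_\infty$; choose $j\in M$ minimizing the cardinality of $\arg\max_{i\in[r]}(a_i+e_{j,i})x_i$; return $\mathbf a+\mathbf e_j$. *)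

(* Defs.v *)
From HB Require Import structures.
From mathcomp Require Import all_boot all_order all_algebra all_fingroup.
Set Implicit Arguments. Unset Strict Implicit. Unset Printing Implicit Defensive.
Import Order.TTheory GRing.Theory Num.Theory.
Local Open Scope ring_scope.

(* Indices are 0-based: paper's index k in [n] is the ordinal of value k-1. *)
Section RAS.
Variables (R : realFieldType) (n : nat).

Definition unitv (j : 'I_n) : 'I_n -> nat := fun i => nat_of_bool (i == j).

Definition unitv1 : 'I_n -> nat := fun i => nat_of_bool (val i == 0%N).

Definition addv (a b : 'I_n -> nat) : 'I_n -> nat := fun i => (a i + b i)%N.

Definition hadam (a : 'I_n -> nat) (x : 'I_n -> R) : 'I_n -> R :=
  fun i => (a i)%:R * x i.

Definition infnorm (v : 'I_n -> R) : R := \big[Num.max/0]_(i : 'I_n) `|v i|.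

(* r (1-based): if a_n = 0 then min{i : a_i = 0}, else n *)
Definition r_of (a : 'I_n -> nat) : nat :=
  if [exists i : 'I_n, (val i == n.-1) && (a i == 0%N)]
  then (find (fun i : 'I_n => a i == 0%N) (enum 'I_n)).+1
  else n.

Definition argmax_r (r : nat) (w : 'I_n -> R) : {set 'I_n} :=
  [set i : 'I_n | (val i < r)%N && [forall k : 'I_n, (val k < r)%N ==> (w k <= w i)]].

Definition in_M (x : 'I_n -> R) (a : 'I_n -> nat) (j : 'I_n) : Prop :=
  (val j < r_of a)%N /\
  forall i : 'I_n, (val i < r_of a)%N ->
    infnorm (hadam (addv a (unitv j)) x) <= infnorm (hadam (addv a (unitv i)) x).

Definition tiecard (x : 'I_n -> R) (a : 'I_n -> nat) (j : 'I_n) : nat :=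
  #|argmax_r (r_of a) (hadam (addv a (unitv j)) x)|.

(* RAS on an already sorted input y (y_1 <= ... <= y_n), as a relation:
   RAS_sorted y B a  <->  a is a possible output of RAS(y;B) under some
   admissible tie-breaking. *)
Inductive RAS_sorted (y : 'I_n -> R) : nat -> ('I_n -> nat) -> Prop :=
| RAS_base : RAS_sorted y 1 unitv1
| RAS_step (B : nat) (a : 'I_n -> nat) (j : 'I_n) :
    RAS_sorted y B a ->
    in_M y a j ->
    (forall j' : 'I_n, in_M y a j' -> (tiecard y a j <= tiecard y a j')%N) ->
    RAS_sorted y B.+1 (addv a (unitv j)).

(* General RAS: relabel so that x is nondecreasing (via a permutation s,
   new index k = old index s k), run, and return in the original labeling. *)
Definition RAS (x : 'I_n -> R) (B : nat) (a : 'I_n -> nat) : Prop :=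
  exists (s : 'S_n) (b : 'I_n -> nat),
    (forall k l : 'I_n, (val k <= val l)%N -> x (s k) <= x (s l)) /\
    RAS_sorted (fun k => x (s k)) B b /\
    (forall k : 'I_n, a (s k) = b k).

End RAS.

(* Main.v *)
Require Import Defs.
From HB Require Import structures.
From mathcomp Require Import all_boot all_order all_algebra all_fingroup.
Import Order.TTheory GRing.Theory Num.Theory.
Local Open Scope ring_scope.

Section Proof.
Variables (R : realFieldType) (n : nat) (y : 'I_n -> R).
Hypothesis y0 : forall i, 0 <= y i.
Hypothesis ysort : forall k l : 'I_n, (val k <= val l)%N -> y k <= y l.

Definition PP (a : 'I_n -> nat) :=
  forall i j : 'I_n, (a j)%:R * y j <= ((a i)%:R + 1) * y i.
Definition QQ (a : 'I_n -> nat) :=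
  forall k l : 'I_n, (val k <= val l)%N -> a k = 0%N -> a l = 0%N.

Lemma infnorm_ge (v : 'I_n -> R) j : `|v j| <= infnorm v.
Proof.
rewrite /infnorm.
have : j \in index_enum 'I_n by apply: mem_index_enum.
elim: (index_enum 'I_n) => [//|h t IH]; rewrite inE big_cons /=.
case/orP => [/eqP <-|/IH H]; rewrite le_max ?lexx //.
by rewrite H orbT.
Qed.

Lemma infnorm_le (v : 'I_n -> R) c : 0 <= c -> (forall l, `|v l| <= c) -> infnorm v <= c.
Proof.
move=> c0 H; rewrite /infnorm.
elim: (index_enum 'I_n) => [|h t IH]; rewrite ?big_nil ?big_cons //=.
by rewrite ge_max H IH.
Qed.

Lemma find_le (a : 'I_n -> nat) k : a k = 0%N ->
  (find (fun i : 'I_n => a i == 0%N) (enum 'I_n) <= val k)%N.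
Proof.
move=> ak; rewrite leqNgt; apply/negP => lt.
have := before_find k lt; rewrite nth_ord_enum ak eqxx //.
Qed.

Lemma find_zero (a : 'I_n -> nat) k : a k = 0%N ->
  exists k0 : 'I_n, val k0 = find (fun i : 'I_n => a i == 0%N) (enum 'I_n)
     /\ a k0 = 0%N.
Proof.
move=> ak.
have hs : has (fun i : 'I_n => a i == 0%N) (enum 'I_n).
  by apply/hasP; exists k; rewrite ?mem_enum ?ak.
have := nth_find k hs; move: (hs); rewrite has_find size_enum_ord => lt.
move=> /eqP H; exists (nth k (enum 'I_n) (find (fun i : 'I_n => a i == 0%N) (enum 'I_n))).
by split => //; apply: nth_enum_ord.
Qed.

Lemma step_ok (a : 'I_n -> nat) j :
  PP a -> QQ a -> in_M y a j -> PP (Defs.addv a (unitv j)) /\ QQ (Defs.addv a (unitv j)).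
Proof.
move=> P Q [jr Hmin].
have Hval : forall i l, hadam (Defs.addv a (unitv i)) y l = ((a l + (l == i))%N)%:R * y l by [].
have Hnorm : forall i, infnorm (hadam (Defs.addv a (unitv i)) y) <= ((a i)%:R + 1) * y i.
  move=> i; apply: infnorm_le.
    by apply: mulr_ge0 => //; apply: addr_ge0.
  move=> l; rewrite Hval ger0_norm; last by apply: mulr_ge0.
  case: (eqVneq l i) => [->|ne]; first by rewrite addn1 -natr1.
  by rewrite addn0; apply: P.
have Hj : ((a j)%:R + 1) * y j <= infnorm (hadam (Defs.addv a (unitv j)) y).
  have := infnorm_ge (hadam (Defs.addv a (unitv j)) y) j.
  rewrite Hval eqxx addn1 -natr1 ger0_norm //.
  by apply: mulr_ge0 => //; apply: addr_ge0.
have key : forall i, (val i < r_of a)%N -> ((a j)%:R + 1) * y j <= ((a i)%:R + 1) * y i.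
  move=> i ir; apply: (le_trans Hj); apply: (le_trans (Hmin i ir)); exact: Hnorm.
split.
  move=> i l; rewrite /Defs.addv /unitv.
  have Hl : ((a l + (l == j))%N)%:R * y l <= ((a l)%:R + 1) * y l.
    case: (l == j); rewrite ?addn1 ?addn0 -?natr1 //.
  have Hi : ((a i)%:R + 1) * y i <= ((a i + (i == j))%N%:R + 1) * y i.
    apply: ler_wpM2r => //; rewrite lerD2r ler_nat; exact: leq_addr.
  apply: le_trans Hi.
  case: (eqVneq l j) => [->|nlj]; last by rewrite addn0; apply: P.
  rewrite addn1 -natr1.
  case: (ltnP (val i) (r_of a)) => [ir|ir]; first by apply: key.
  move: ir; rewrite /r_of; case: ifP => [Hex|_] ir; last first.
    by have := ltn_ord i; rewrite ltnNge ir.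
  have [k /andP [_ /eqP ak]] := existsP Hex.
  have [k0 [vk0 ak0]] := find_zero a k ak.
  have ai : a i = 0%N by apply: (Q k0) => //; rewrite vk0; apply: ltnW.
  have kk : (val k0 < r_of a)%N by rewrite /r_of Hex vk0.
  apply: (le_trans (key k0 kk)).
  rewrite ak0 ai add0r mul1r.
rewrite ?mul1r.
apply: ysort; rewrite vk0; exact: ltnW.
move=> k l kl; rewrite /Defs.addv /unitv => /eqP; rewrite addn_eq0 => /andP [/eqP ak].
rewrite eqb0 => nkj.
rewrite (Q k l kl ak) add0n; apply/eqP; rewrite eqb0; apply/eqP => lj.
move: jr; rewrite /r_of; case: ifP => [_|].
  rewrite ltnS => jf; have := find_le a _ ak => fk.
  move/negP: nkj; apply; apply/eqP; apply: val_inj.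
  apply/eqP.
by subst l; rewrite eqn_leq (leq_trans jf fk) kl.
move=> /negbT /negP Hne _; apply: Hne; apply/existsP.
have nz : (0 < n)%N by case: n k {kl ak nkj lj} => [[]|].
have lt : (n.-1 < n)%N by rewrite ltn_predL.
exists (Ordinal lt); rewrite eqxx /=.
apply/eqP; apply: (Q k) => //=; rewrite -ltnS prednK //.
Qed.

Lemma main_inv B a : RAS_sorted y B a -> PP a /\ QQ a.
Proof.
elim => [|B' a' j _ [P Q] HM _]; last by apply: step_ok.
split.
  move=> i j; rewrite /unitv1.
  have Hi : y i <= ((nat_of_bool (val i == 0%N))%:R + 1) * y i.
    by rewrite -[X in X <= _]mul1r; apply: ler_wpM2r => //; rewrite lerDr.
  apply: le_trans Hi.
  case: eqP => j0 /=; last by rewrite mul0r.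
  by rewrite mul1r; apply: ysort; rewrite j0.
move=> k l kl; rewrite /unitv1; case: (eqVneq (val k) 0%N) => // k0 _.
case: (eqVneq (val l) 0%N) => // l0.
by move: kl; rewrite l0 leqn0 (negbTE k0).
Qed.

End Proof.

Theorem lemmaD1 (R : realFieldType) (n : nat) (x : 'I_n -> R) (B : nat)
  (a : 'I_n -> nat) :
  (0 < n)%N -> (forall i, 0 <= x i) -> (1 <= B)%N -> RAS x B a ->
  forall i j : 'I_n, (a j)%:R * x j <= ((a i)%:R + 1) * x i.
Proof.
move=> _ x0 _ [s [b [srt [HR Hab]]]] i j.
have [P _] := @main_inv R n (fun k => x (s k)) (fun k => x0 (s k)) srt B b HR.
have := P (s^-1 i)%g (s^-1 j)%g.
by rewrite -!Hab !permKV.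
Qed.
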